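(* For every $p\ge 0$, every permutation in the basis $\mathcal{B}_p$ has length $n$ with $p+2\le n\le 2(p+1)$. In particular $\mathcal{B}_p$ is finite.
   Context: A right-jump transforms $\sigma=\sigma_1\cdots\sigma_n$ into $\sigma_1\cdots\sigma_{i-1}\sigma_{i+1}\cdots\sigma_j\sigma_i\sigma_{j+1}\cdots\sigma_n$ for some $1\le i<j\le n$. A permutation $\pi$ of $[k]$ is a pattern of $\sigma$ (written $\pi\prec\sigma$) if some subsequence of $\sigma$ is order-isomorphic to $\pi$. $\mathcal{C}_p$ is the set of all permutations (of any length $n$) obtainable from the identity $12\cdots n$ by at most $p$ right-jumps. The basis $\mathcal{B}_p$ is the set of permutations $\sigma\notin\mathcal{C}_p$ such that every pattern $\pi\prec\sigma$ with $\pi\ne\sigma$ lies in $\mathcal{C}_p$. *)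

(* Defs.v *)
(* Permutations of [n] are represented as sequences of
   naturals that are rearrangements of 1..n. *)
From mathcomp Require Import all_boot.
Set Implicit Arguments. Unset Strict Implicit. Unset Printing Implicit Defensive.

Definition is_perm (s : seq nat) : bool := perm_eq s (iota 1 (size s)).

Definition idperm (n : nat) : seq nat := iota 1 n.

(* Right jump, 0-indexed positions i < j < size s:
   s_0..s_{i-1} s_{i+1}..s_j s_i s_{j+1}..s_{n-1}
   (corresponds to the 1-indexed right jump with positions i+1 < j+1). *)
Definition rjump (i j : nat) (s : seq nat) : seq nat :=
  take i s ++ take (j - i) (drop i.+1 s) ++ [:: nth 0 s i] ++ drop j.+1 s.

Inductive reach : nat -> seq nat -> Prop :=
| reach_id n : reach 0 (idperm n)
| reach_step k s i j : i < j -> j < size s -> reach k s -> reach k.+1 (rjump i j s).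

Definition inC (p : nat) (s : seq nat) : Prop := exists2 k, k <= p & reach k s.

Definition order_iso (x y : seq nat) : Prop :=
  size x = size y /\
  forall a b, a < size x -> b < size x -> (nth 0 x a < nth 0 x b) = (nth 0 y a < nth 0 y b).

Definition pattern (pi sigma : seq nat) : Prop :=
  is_perm pi /\ exists2 m : bitseq, size m = size sigma & order_iso (mask m sigma) pi.

Definition inB (p : nat) (sigma : seq nat) : Prop :=
  is_perm sigma /\ ~ inC p sigma /\
  forall pi, pattern pi sigma -> pi <> sigma -> inC p pi.

(* Main.v *)
Require Import Defs.
From mathcomp Require Import all_boot zify.
Set Implicit Arguments. Unset Strict Implicit.

Fixpoint flags (pre s : seq nat) : seq bool :=
  match s with
  | [::] => [::]
  | x :: t => has (fun w => x < w) pre :: flags (x :: pre) t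
  end.
Definition nl pre s := count id (flags pre s).

Lemma nl_cons pre x t : nl pre (x :: t) = has (fun w => x < w) pre + nl (x :: pre) t.
Proof. by []. Qed.

Lemma size_flags pre s : size (flags pre s) = size s.
Proof. by elim: s pre => //= x t IH pre; rewrite IH. Qed.

Lemma nl_cat pre s1 s2 : nl pre (s1 ++ s2) = nl pre s1 + nl (rev s1 ++ pre) s2.
Proof.
elim: s1 pre => //= x t IH pre; rewrite /nl /= -/(nl _ _) IH rev_cons cat_rcons.
by rewrite /nl addnA.
Qed.

Lemma nl_eqmem pre pre' s : pre =i pre' -> nl pre s = nl pre' s.
Proof.
elim: s pre pre' => //= x t IH pre pre' E; rewrite !nl_cons (eq_has_r E).
by rewrite (IH _ (x :: pre')) // => w; rewrite !inE E.
Qed.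

Lemma nl_mono pre pre' s : {subset pre <= pre'} -> nl pre s <= nl pre' s.
Proof.
elim: s pre pre' => //= x t IH pre pre' E; rewrite !nl_cons.
apply: leq_add; last by apply: IH => w; rewrite !inE => /orP [->|/E ->]; rewrite ?orbT.
case H: (has _ pre) => //; move: H => /hasP [w Hw Hl]; have -> // : has (fun w => x < w) pre'; apply/hasP; exists w => //; exact: E.
Qed.

Lemma nl_absorb pre x y s : y \in pre -> x <= y -> nl (x :: pre) s = nl pre s.
Proof.
elim: s pre => //= z t IH pre Hy Hxy; rewrite !nl_cons /=.
have -> : (z < x) || has (fun w => z < w) pre = has (fun w => z < w) pre.
  case: ltnP => //= Hzx; apply/esym/hasP; exists y => //; lia.
congr (_ + _); rewrite (@nl_eqmem _ (x :: z :: pre)); last by move=> w; rewrite !inE orbCA.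
by apply: IH; rewrite // inE Hy orbT.
Qed.

Lemma nl_iota pre a n : (forall y, y \in pre -> y <= a) -> nl pre (iota a n) = 0.
Proof.
elim: n a pre => //= n IH a pre H; rewrite nl_cons IH.
  case: hasP => // [[w /H]]; lia.
move=> y; rewrite inE => /orP [/eqP -> //| /H]; lia.
Qed.
Lemma nl_move pre A B C x :
  nl pre (A ++ B ++ x :: C) <= (nl pre (A ++ x :: B ++ C)).+1.
Proof.
rewrite !nl_cat !nl_cons !nl_cat.
have h1 : nl (rev A ++ pre) B <= nl (x :: rev A ++ pre) B.
  by apply: nl_mono => w Hw; rewrite inE Hw orbT.
have h2 : nl (x :: rev B ++ rev A ++ pre) C = nl (rev B ++ x :: rev A ++ pre) C.
  by apply: nl_eqmem => w; rewrite !(inE, mem_cat) orbCA.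
rewrite h2; set b1 := has _ (rev B ++ _); set b2 := has _ (rev A ++ _); clearbody b1 b2; case: b1; case: b2 => /=; lia.
Qed.

Lemma rjump_split i j s : i < j -> j < size s ->
  s = take i s ++ nth 0 s i :: take (j - i) (drop i.+1 s) ++ drop j.+1 s /\
  rjump i j s = take i s ++ take (j - i) (drop i.+1 s) ++ nth 0 s i :: drop j.+1 s.
Proof.
move=> Hij Hj; split => //.
rewrite -{1}(cat_take_drop i s) (drop_nth 0); last lia.
by rewrite -{1}(cat_take_drop (j - i) (drop i.+1 s)) drop_drop; have -> : j - i + i.+1 = j.+1 by lia.
Qed.

Lemma reach_nl k s : reach k s -> nl [::] s <= k.
Proof.
elim => [n|k' s' i j Hij Hj _ IH]; first by rewrite /idperm nl_iota.
have [E1 E2] := rjump_split Hij Hj.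
rewrite E2; apply: leq_trans (nl_move _ _ _ _ _) _; rewrite -E1; lia.
Qed.

Lemma size_rjump i j s : i < j -> j < size s -> size (rjump i j s) = size s.
Proof.
move=> Hij Hj; have [E1 E2] := rjump_split Hij Hj.
have := congr1 size E1; rewrite E2 !size_cat /= => ->; rewrite size_cat; lia.
Qed.

Lemma rjump_rcons i j s z : i < j -> j < size s ->
  rjump i j (rcons s z) = rcons (rjump i j s) z.
Proof.
move=> Hij Hj; rewrite /rjump -!cats1 -!catA.
rewrite takel_cat; last lia.
rewrite drop_cat; case: ltnP => H1; last lia.
rewrite takel_cat; last by rewrite size_drop; lia.
rewrite nth_cat; case: ltnP => H2; last lia.
rewrite drop_cat; case: ltnP => H3 //.
have -> : j.+1 - size s = 0 by lia.
by rewrite drop0 (@drop_oversize _ j.+1 s).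
Qed.

Lemma reach_rcons k t : reach k t -> reach k (rcons t (size t).+1).
Proof.
elim => [n|k' s' i j Hij Hj _ IH].
  rewrite /idperm size_iota -cats1.
  have -> : iota 1 n ++ [:: n.+1] = iota 1 n.+1 by rewrite -(addn1 n) iotaD add1n addn1.
  exact: (reach_id n.+1).
rewrite size_rjump // -rjump_rcons //; apply: reach_step => //.
by rewrite size_rcons; lia.
Qed.

Lemma has_take_find (a : pred nat) (t : seq nat) : has a (take (find a t) t) = false.
Proof. by elim: t => //= y t IH; case: ifP => //= ->. Qed.

Lemma nl_insert t x i : i = find (fun y => x < y) t -> has (fun y => x < y) t ->
  nl [::] (take i t ++ x :: drop i t) = nl [::] t.
Proof.
move=> Hi Hh.
have Hlt : i < size t by rewrite Hi -has_find.
rewrite -{3}(cat_take_drop i t) !nl_cat nl_cons cats0 has_rev.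
have -> : has (fun w => x < w) (take i t) = false by rewrite Hi has_take_find.
rewrite add0n (drop_nth 0) // !nl_cons.
have Hw : x < nth 0 t i by rewrite Hi; exact: nth_find.
set w := nth 0 t i; set A := rev (take i t).
have -> : has (fun u => w < u) (x :: A) = has (fun u => w < u) A.
  by rewrite /= ltnNge (ltnW Hw).
rewrite (@nl_eqmem (w :: x :: A) (x :: w :: A)); last by move=> u; rewrite !inE orbCA.
by rewrite (@nl_absorb _ x w) // ?inE ?eqxx // ltnW.
Qed.

Lemma suff_reach N s : is_perm s -> size s + nl [::] s <= N ->
  exists2 k, k <= nl [::] s & reach k s.
Proof.
elim: N s => [|N IH] s Hp HN.
  case: s Hp HN => [|//] _ _.
  by exists 0 => //; exact: (reach_id 0).
move: Hp HN; case/lastP: s => [|t x] Hp HN; first by exists 0 => //; exact: (reach_id 0).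
have Hu : uniq (rcons t x) by rewrite (perm_uniq Hp) iota_uniq.
have Hx : x \in iota 1 (size (rcons t x)) by rewrite -(perm_mem Hp) mem_rcons inE eqxx.
rewrite size_rcons mem_iota in Hx.
have Hnl : nl [::] (rcons t x) = nl [::] t + has (fun w => x < w) (rev t).
  by rewrite -cats1 nl_cat nl_cons cats0 /nl /= addn0.
case: (eqVneq x (size t).+1) => Ex.
  have Hpt : is_perm t.
    move: Hp; rewrite /is_perm size_rcons.
    have -> : iota 1 (size t).+1 = rcons (iota 1 (size t)) (size t).+1.
      by rewrite -cats1 -(addn1 (size t)) iotaD add1n addn1.
    by rewrite Ex perm_rcons perm_sym perm_rcons perm_cons perm_sym.
  have [k Hk Hr] := IH t Hpt ltac:(rewrite size_rcons Hnl in HN; lia).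
  exists k; first by rewrite Hnl; lia.
  by rewrite Ex; exact: reach_rcons.
have Hnt : (size t).+1 \in t.
  have : (size t).+1 \in rcons t x by rewrite (perm_mem Hp) mem_iota size_rcons; lia.
  by rewrite mem_rcons inE eq_sym (negPf Ex).
have Hh : has (fun y => x < y) t by apply/hasP; exists (size t).+1 => //; lia.
have Hbad : has (fun w => x < w) (rev t) by rewrite has_rev.
set i := find (fun y => x < y) t.
have Hlt : i < size t by rewrite /i -has_find.
set s' := take i t ++ x :: drop i t.
have Hs' : nl [::] s' = nl [::] t by exact: nl_insert.
have Hsz : size s' = (size t).+1 by rewrite /s' size_cat /= size_take size_drop Hlt; lia.
have Hps : perm_eq s' (rcons t x).
  have h1 : perm_eq s' (x :: t) by rewrite /s' -cat1s perm_catCA /= cat_take_drop.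
  have h2 : perm_eq (rcons t x) (x :: t) by rewrite perm_rcons.
  by apply: perm_trans h1 _; rewrite perm_sym.
have Hp' : is_perm s' by rewrite /is_perm Hsz -(size_rcons t x); exact: perm_trans Hps Hp.
have [k Hk Hr] := IH s' Hp' ltac:(rewrite Hsz Hs'; rewrite size_rcons Hnl Hbad in HN; lia).
exists k.+1; first by rewrite Hnl Hbad -Hs'; lia.
have -> : rcons t x = rjump i (size t) s'.
  have Ht : size (take i t) = i by rewrite size_take Hlt.
  rewrite /rjump (@drop_oversize _ (size t).+1 s') ?Hsz // /s'.
  rewrite takel_cat ?Ht // drop_cat Ht ltnNge leqnSn /= subSnn /= drop0.
  rewrite (@take_oversize _ (size t - i) (drop i t)) ?size_drop // nth_cat Ht ltnn subnn /=.
  by rewrite (@take_oversize _ i (take i t)) ?Ht // catA cat_take_drop cats1.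
by apply: (reach_step Hlt _ Hr); rewrite Hsz.
Qed.

Lemma nl_map (P : pred nat) f pre s :
  {in P &, forall u v, (u < v) = (f u < f v)} ->
  {subset pre <= P} -> {subset s <= P} -> nl (map f pre) (map f s) = nl pre s.
Proof.
move=> Hf; elim: s pre => //= x t IH pre Hpre Hs; rewrite !nl_cons.
have Hx : x \in P by apply: Hs; rewrite inE eqxx.
have -> : has (fun w => f x < w) (map f pre) = has (fun w => x < w) pre.
  elim: pre Hpre {IH} => //= w pre' IHp Hp.
  have Hw : w \in P by apply: Hp; rewrite inE eqxx.
  rewrite -Hf // IHp // => u Hu; apply: Hp; by rewrite inE Hu orbT.
congr (_ + _).
apply: (IH (x :: pre)).
  by move=> w; rewrite inE => /orP [/eqP ->|/Hpre].
by move=> w Hw; apply: Hs; rewrite inE Hw orbT.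
Qed.

Lemma order_iso_nl x y : order_iso x y -> nl [::] y = nl [::] x.
Proof.
move=> [Hsz Ho].
pose f v := nth 0 y (index v x).
have Hf : {in x &, forall u v, (u < v) = (f u < f v)}.
  move=> u v Hu Hv; rewrite /f.
  have Hu' := Hu; have Hv' := Hv.
  rewrite -index_mem in Hu'; rewrite -index_mem in Hv'.
  by rewrite -Ho // !nth_index.
have Hy : y = map f x.
  apply: (@eq_from_nth _ 0); first by rewrite size_map.
  move=> i Hi; rewrite (nth_map 0) -?Hsz // /f.
  have Hm : nth 0 x i \in x by apply: mem_nth; rewrite Hsz.
  have Ha : index (nth 0 x i) x < size x by rewrite index_mem.
  have E := nth_index 0 Hm.
  have Hi' : i < size x by rewrite Hsz.
  have h1 := Ho _ _ Ha Hi'.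
  have h2 := Ho _ _ Hi' Ha.
  rewrite E ltnn in h1 h2.
  move: h1 h2 => /esym/negbT h1 /esym/negbT h2; lia.
  by rewrite Hsz.
rewrite Hy -[[::]]/(map f [::]); exact: (@nl_map (mem x)).
Qed.

Definition rank (s : seq nat) v := count (fun w => w <= v) s.
Definition std (s : seq nat) := map (rank s) s.

Lemma rank_le s u v : u <= v -> rank s u <= rank s v.
Proof. move=> H; apply: sub_count => w /= Hw; exact: leq_trans Hw H. Qed.

Lemma rank_lt s u v : v \in s -> u < v -> rank s u < rank s v.
Proof.
elim: s => //= w s IH; rewrite inE => /orP [/eqP <-|Hv] Huv.
  have -> : (v <= u) = false by rewrite leqNgt Huv.
  rewrite leqnn /= add0n add1n ltnS; exact: rank_le (ltnW Huv).
have := IH Hv Huv; case: (leqP w u) => H1 /=.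
  by rewrite (leq_trans H1 (ltnW Huv)).
case: (w <= v); rewrite /= ?add0n ?add1n //; lia.
Qed.

Lemma std_iso s : order_iso s (std s).
Proof.
split; first by rewrite size_map.
move=> a b Ha Hb; rewrite !(nth_map 0) //.
case: (ltnP (nth 0 s a) (nth 0 s b)) => H.
  by rewrite rank_lt // mem_nth.
by apply/esym/negbTE; rewrite -leqNgt rank_le.
Qed.

Lemma std_perm s : uniq s -> is_perm (std s).
Proof.
move=> Hu.
have Hinj : {in s &, injective (rank s)}.
  move=> u v Hu' Hv' E; case: (ltngtP u v) => // H.
    by have := rank_lt Hv' H; rewrite E ltnn.
  by have := rank_lt Hu' H; rewrite E ltnn.
have Hus : uniq (std s) by rewrite map_inj_in_uniq.
rewrite /is_perm; apply: uniq_perm => //; first exact: iota_uniq.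
have Hsub : {subset std s <= iota 1 (size (std s))}.
  move=> r /mapP [v Hv ->]; rewrite mem_iota size_map add1n ltnS.
  apply/andP; split; last exact: count_size.
  by rewrite /rank -has_count; apply/hasP; exists v => /=.
have [_ E] := uniq_min_size Hus Hsub ltac:(by rewrite size_iota).
exact: E.
Qed.

Fixpoint good (l : seq bool) : bool :=
  match l with
  | [::] => true
  | [:: b] => b
  | b :: ((c :: _) as t) => (b || c) && good t
  end.

Lemma good_count l : good l -> count negb l <= count id l.
Proof.
move: {2}(size l) (leqnn (size l)) => n; elim: n l => [|n IH] [|b [|c t]] //=.
all: try by case: b.
move=> Hs /andP [Hbc Hg].
have Hg' : good (c :: t) by [].
case: b Hbc => /= Hbc.
  have := IH (c :: t) ltac:(simpl; lia) Hg'; simpl; lia.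
rewrite Hbc /= in Hg' *; case: t Hs Hg' {Hg} => [|d t] /= Hs Hg; first by [].
have {}Hg : good (d :: t) by [].
have := IH (d :: t) ltac:(simpl; lia) Hg; simpl; case: d {Hg} => /=; lia.
Qed.

Lemma good_cons2 b c l : good [:: b, c & l] = (b || c) && good (c :: l).
Proof. by []. Qed.

Lemma flags_good pre s :
 (forall A y z B, s = A ++ y :: z :: B ->
    has (fun w => y < w) (rev A ++ pre) || has (fun w => z < w) (y :: rev A ++ pre)) ->
 (forall A y, s = rcons A y -> has (fun w => y < w) (rev A ++ pre)) ->
 good (flags pre s).
Proof.
elim: s pre => // x t IH pre H1 H2.
case: t IH H1 H2 => [|z t] IH H1 H2.
  by have := H2 [::] x erefl.
have -> : flags pre [:: x, z & t] = has (fun w => x < w) pre :: flags (x :: pre) (z :: t) by [].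
have -> : flags (x :: pre) (z :: t) = has (fun w => z < w) (x :: pre) :: flags (z :: x :: pre) t by [].
rewrite good_cons2; apply/andP; split.
  exact: (H1 [::] x z t erefl).
rewrite -[has _ (x :: pre) :: _]/(flags (x :: pre) (z :: t)); apply: IH.
  move=> A y z' B E; have := H1 (x :: A) y z' B ltac:(by rewrite E).
  by rewrite rev_cons cat_rcons.
move=> A y E; have := H2 (x :: A) y ltac:(by rewrite E).
by rewrite rev_cons cat_rcons.
Qed.

Lemma bad_exists pre s : 0 < nl pre s ->
  exists A y B, s = A ++ y :: B /\ has (fun w => y < w) (rev A ++ pre).
Proof.
elim: s pre => // x t IH pre; rewrite nl_cons; case H: has => /=.
  by move=> _; exists [::], x, t.
move=> /IH [A [y [B [-> Hh]]]]; exists (x :: A), y, B; split => //.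
by rewrite rev_cons cat_rcons.
Qed.

Lemma inB_bounds p s : inB p s -> p + 2 <= size s <= 2 * (p + 1).
Proof.
move=> [Hp [HnC Hpat]].
have Hu : uniq s by rewrite (perm_uniq Hp) iota_uniq.
have Hge : p + 1 <= nl [::] s.
  rewrite leqNgt; apply/negP => Hlt; apply: HnC.
  have [k Hk Hr] := @suff_reach (size s + nl [::] s) s Hp (leqnn _).
  by exists k => //; lia.
have Hdel : forall A y B, s = A ++ y :: B -> nl [::] (A ++ B) <= p.
  move=> A y B E.
  have HuAB : uniq (A ++ B).
    apply: (subseq_uniq _ Hu); rewrite E; apply: cat_subseq => //; exact: subseq_cons.
  have Hpp : pattern (std (A ++ B)) s.
    split; first exact: std_perm.
    exists (nseq (size A) true ++ false :: nseq (size B) true).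
      by rewrite E !size_cat /= !size_nseq.
    rewrite E mask_cat ?size_nseq // /= !mask_true //; exact: std_iso.
  have Hne : std (A ++ B) <> s.
    move=> E2; have := congr1 size E2; rewrite size_map E !size_cat /=; lia.
  have [k Hk Hr] := Hpat _ Hpp Hne.
  have := reach_nl Hr; rewrite (order_iso_nl (std_iso _)); lia.
have Hle : nl [::] s <= p + 1.
  have [A [y [B [E Hh]]]] := @bad_exists [::] s ltac:(lia).
  have := Hdel A y B E.
  rewrite cats0 in Hh; rewrite E !nl_cat nl_cons !cats0 Hh.
  have [w Hw Hyw] := hasP Hh.
  rewrite (@nl_absorb _ y w) //; [lia | exact: ltnW].
have Hg : good (flags [::] s).
  apply: flags_good.
    move=> A y z B E; apply/negPn/negP; rewrite !cats0 negb_or => /andP [Hy Hz].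
    move: (Hz); rewrite /= negb_or => /andP [Hzy HzA].
    have := Hdel A y (z :: B) E.
    move: Hge; rewrite E !nl_cat !nl_cons !cats0 (negPf Hy) (negPf Hz) (negPf HzA).
    rewrite (@nl_eqmem [:: z, y & rev A] [:: y, z & rev A]); last by move=> u; rewrite !inE orbCA.
    rewrite (@nl_absorb _ y z) ?inE ?eqxx //; last by rewrite leqNgt.
    lia.
  move=> A y E; apply/negPn/negP; rewrite cats0 => Hy.
  have := Hdel A y [::] ltac:(by rewrite E cats1).
  move: Hge; rewrite E -cats1 nl_cat nl_cons cats0 (negPf Hy) cats0 /nl /=; lia.
have Hc := good_count Hg.
have Hsz : size s = count id (flags [::] s) + count negb (flags [::] s).
  by rewrite -(size_flags [::] s) -(count_predC id) .
have Hpos : 0 < count negb (flags [::] s).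
  by move: Hge; case: (s) => [|x t]; rewrite /nl /=; lia.
rewrite -/(nl [::] s) in Hsz Hc.
apply/andP; split; lia.
Qed.

Theorem mainTheorem5 :
  forall p : nat,
    (forall sigma : seq nat, inB p sigma ->
       p + 2 <= size sigma <= 2 * (p + 1)) /\
    (exists L : seq (seq nat), forall sigma, inB p sigma -> sigma \in L).
Proof.
move=> p; split; first exact: inB_bounds.
exists (flatten [seq permutations (iota 1 k) | k <- iota 0 (2 * (p + 1)).+1]).
move=> s Hs; have /andP [_ Hb] := inB_bounds Hs.
apply/flatten_mapP; exists (size s).
  by rewrite mem_iota; lia.
by rewrite mem_permutations; case: Hs.
Qed.
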